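(* Let $q \equiv 1 \pmod 4$ be a prime number with $q \ge 13$, let $s$ be a generator of $\mathbb Z_q^*$, and let $a_0, a_1, \dots, a_{q-2} \in \mathbb Z_q$. Suppose that each of the sets $$\{a_0, a_4, a_8, \dots, a_{q-5}\},\ \{a_1, a_5, a_9, \dots, a_{q-4}\},\ \{a_2, a_6, a_{10}, \dots, a_{q-3}\},\ \{a_3, a_7, a_{11}, \dots, a_{q-2}\}$$ has at least two distinct elements modulo $q$. Then each of the sets $$\mathcal A_e = \left\{a_{\sigma(0)} + a_{\sigma(2)}s^2 + a_{\sigma(4)}s^4 + \cdots + a_{\sigma(q-3)}s^{q-3} \;\middle|\; \sigma \text{ a permutation of } (0, 2, 4, \dots, q-3) \right\},$$ $$\mathcal A_o = \left\{a_{\tau(1)}s + a_{\tau(3)}s^3 + a_{\tau(5)}s^5 + \cdots + a_{\tau(q-2)}s^{q-2} \;\middle|\; \tau \text{ a permutation of } (1, 3, 5, \dots, q-2) \right\}$$ (subsets of $\mathbb Z_q$) has at least $q-1$ distinct elements. *)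

(* Defs.v *)
From HB Require Import structures.
From mathcomp Require Import all_boot all_order all_algebra all_fingroup.
Set Implicit Arguments. Unset Strict Implicit. Unset Printing Implicit Defensive.
Import GRing.Theory.
Local Open Scope ring_scope.

Definition generator_units (q : nat) (s : 'F_q) : Prop :=
  s != 0 /\ forall x : 'F_q, x != 0 -> exists k : nat, x = s ^+ k.

Definition class_nonconstant (q : nat) (a : nat -> 'F_q) (r : nat) : Prop :=
  exists i j : nat, [/\ (i < q.-1)%N, (j < q.-1)%N, (i %% 4 = r)%N, (j %% 4 = r)%N
                      & a i != a j].

(* A_e : sigma a permutation of the even indices 0,2,...,q-3,
   written as 2*k, k < (q-1)/2. *)
Definition A_even (q : nat) (s : 'F_q) (a : nat -> 'F_q) : {set 'F_q} :=
  [set \sum_(k < q.-1./2) a (2 * sigma k)%N * s ^+ (2 * k) | sigma : 'S_(q.-1./2)].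

(* A_o : tau a permutation of the odd indices 1,3,...,q-2. *)
Definition A_odd (q : nat) (s : 'F_q) (a : nat -> 'F_q) : {set 'F_q} :=
  [set \sum_(k < q.-1./2) a (2 * tau k).+1 * s ^+ (2 * k).+1 | tau : 'S_(q.-1./2)].

(* Main.v *)
Require Import Defs.
From HB Require Import structures.
From mathcomp Require Import all_boot all_order all_algebra all_fingroup.
From mathcomp Require Import ring zify finfield.
Import GRing.Theory.
Local Open Scope ring_scope.


Section Lag.
Variable F : fieldType.

Lemma lagrange_sum (G : seq F) (e : nat) :
  uniq G -> (e < size G)%N ->
  \sum_(y <- G) (\prod_(f <- G | f != y) (y - f))^-1 * y ^+ e =
  (e == (size G).-1)%:R.
Proof.
move=> uG ltG.
pose l y := \prod_(f <- G | f != y) ('X - f%:P).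
pose w y := (\prod_(f <- G | f != y) (y - f))^-1.
pose L := \sum_(y <- G) (w y * y ^+ e) *: l y.
have sz_l y : y \in G -> size (l y) = size G.
  move=> yG; rewrite /l -big_filter size_prod_XsubC size_filter.
  have := count_predC (pred1 y) G; rewrite count_uniq_mem // yG.
  by case: (size G) => [|m] //= <-; rewrite add1n.
have mon_l y : l y \is monic by rewrite /l -big_filter monic_prod_XsubC.
have wnz y : y \in G -> \prod_(f <- G | f != y) (y - f) != 0.
  move=> yG; rewrite prodf_seq_eq0; apply/hasPn => f fG /=.
  by apply/negP => /andP[fy]; rewrite subr_eq0 eq_sym (negPf fy).
have hl y z : y \in G -> z \in G -> (l y).[z] = if z == y then (w y)^-1 else 0.
  move=> yG zG; rewrite /l horner_prod.
  under eq_bigr do rewrite hornerXsubC.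
  case: eqP => [->|zy]; first by rewrite /w invrK.
  apply/eqP; rewrite prodf_seq_eq0; apply/hasP; exists z => //=.
  by rewrite subrr eqxx andbT; apply/eqP.
have LE : L = 'X^e.
  apply/eqP; rewrite -subr_eq0; apply/negPn/negP => nz.
  have := max_poly_roots nz _ uG.
  have -> : all (root (L - 'X^e)) G.
    apply/allP => z zG; rewrite /root hornerD hornerN hornerXn /L horner_sum.
    rewrite (bigD1_seq z) //= hornerZ hl // eqxx mulrAC mulfV ?mul1r ?invr_neq0 ?wnz // big1_seq ?addr0 ?subrr //.
    by move=> y /andP[yz yG]; rewrite hornerZ hl // eq_sym (negPf yz) mulr0.
  move=> /(_ isT); apply/negP; rewrite -leqNgt.
  apply: leq_trans (size_polyD _ _) _; rewrite size_polyN geq_max size_polyXn ltG andbT.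
  apply: leq_trans (size_sum _ _ _) _; apply/bigmax_leqP_seq => y yG _.
  by apply: leq_trans (size_scale_leq _ _) _; rewrite sz_l.
rewrite eq_sym; have := congr1 (fun p : {poly F} => p`_(size G).-1) LE.
rewrite coefXn /L coef_sum /= => <-.
apply: eq_big_seq => y yG; rewrite coefZ.
move: (mon_l y); rewrite monicE lead_coefE sz_l // => /eqP ->.
by rewrite mulr1.
Qed.

End Lag.

Section Hasse.
Variable F : fieldType.

Lemma hasse_dvd (p : {poly F}) a m :
  (forall l, (l < m)%N -> (p^`N(l)).[a] = 0) -> ('X - a%:P) ^+ m %| p.
Proof.
elim: m p => [|m IH] p H; first by rewrite expr0 dvd1p.
have : root p a by rewrite /root -[p]nderivn0 H.
case/factor_theorem => r pE.
rewrite pE exprSr dvdp_mul2r ?polyXsubC_eq0 //.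
apply: IH => l ltl; have := H l.+1 ltl; rewrite pE.
have -> : r * ('X - a%:P) = (r * 'X + 0%:P) - a *: r.
  by rewrite polyC0 addr0 mulrBr -mul_polyC (mulrC a%:P).
rewrite nderivnB nderivnMXaddC nderivnZ !hornerE.
rewrite mulrC addrK; exact.
Qed.

Lemma mup_sum_lt (s : seq F) (p : {poly F}) :
  p != 0 -> uniq s -> (\sum_(a <- s) mup a p < size p)%N.
Proof.
elim: s p => [|a s IH] p pnz /=; first by rewrite big_nil size_poly_gt0.
case/andP => aNs us; rewrite big_cons.
set m := mup a p.
have : ('X - a%:P) ^+ m %| p by rewrite -mup_geq.
case/dvdpP => r pE.
have rnz : r != 0 by apply: contraNneq pnz => r0; rewrite pE r0 mul0r.
have Enz : ('X - a%:P) ^+ m != 0 by rewrite expf_neq0 ?polyXsubC_eq0.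
have -> : (\sum_(b <- s) mup b p = \sum_(b <- s) mup b r)%N.
  apply: eq_big_seq => b bs; rewrite pE mupMl //.
  rewrite /root horner_exp hornerXsubC expf_neq0 // subr_eq0.
  by apply: contraNneq aNs => <-.
have := IH r rnz us; rewrite [in size p]pE size_mul // size_exp_XsubC addnS /=.
by rewrite addnC ltn_add2r.
Qed.

End Hasse.

Section Grid.
Variable F : fieldType.

Definition upd (x : nat -> F) k y := fun i => if i == k then y else x i.

Fixpoint gsum (G : nat -> seq F) k (h : (nat -> F) -> F) : F :=
  if k is k'.+1 then \sum_(y <- G k') gsum G k' (fun x => h (upd x k' y))
  else h (fun _ => 0).

Lemma gsum_ext G k h1 h2 :
  (forall x, (forall i, (i < k)%N -> x i \in G i) -> h1 x = h2 x) ->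
  gsum G k h1 = gsum G k h2.
Proof.
elim: k h1 h2 => [|k IH] h1 h2 H /=; first by apply: H.
apply: eq_big_seq => y yG; apply: IH => x Hx; apply: H => i.
rewrite ltnS leq_eqVlt /upd; case: eqP => [->|_] //= ; exact: Hx.
Qed.

Lemma gsum0 G k : gsum G k (fun _ => 0) = 0.
Proof. by elim: k => //= k IH; rewrite big1. Qed.

Lemma gsumZ G k a h : gsum G k (fun x => a * h x) = a * gsum G k h.
Proof.
elim: k h => [|k IH] h //=; rewrite mulr_sumr; apply: eq_bigr => y _.
exact: IH.
Qed.

Lemma gsum_sum G k (I : Type) (r : seq I) (h : I -> (nat -> F) -> F) :
  gsum G k (fun x => \sum_(j <- r) h j x) = \sum_(j <- r) gsum G k (h j).
Proof.
elim: k h => [|k IH] h //=.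
rewrite exchange_big /=; apply: eq_bigr => y _.
exact: (IH (fun j x => h j (upd x k y))).
Qed.

Definition Wf (w : nat -> F -> F) k (x : nat -> F) := \prod_(i < k) w i (x i).
Definition Vm k (x : nat -> F) (g : nat -> nat) : 'M[F]_k :=
  \matrix_(i < k, j < k) x i ^+ g j.
Definition Lf (c : nat -> F) k (x : nat -> F) := \sum_(i < k) c i * x i.
Definition gg (t g : nat) (a : F) : F :=
  if (g <= t)%N then a ^+ (t - g) / (t - g)`!%:R else 0.
Definition Bm k (t : nat -> nat) (g : nat -> nat) (c : nat -> F) : 'M[F]_k :=
  \matrix_(i < k, j < k) gg (t i) (g j) (c i).

Lemma sum_lift (g : nat -> nat) k (j : 'I_k.+1) :
  (\sum_(j0 < k.+1) g j0 = g j + \sum_(j' < k) g (bump j j'))%N.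
Proof. by rewrite (bigD1_ord j) //=. Qed.

Lemma bump_max k (i : 'I_k) : bump k i = i.
Proof. by rewrite /bump leqNgt ltn_ord. Qed.

Lemma Bm_minor k (t g : nat -> nat) (c : nat -> F) (j : 'I_k.+1) :
  row' ord_max (col' j (Bm k.+1 t g c)) = Bm k t (fun j' => g (bump j j')) c.
Proof. by apply/matrixP => i j'; rewrite !mxE /= bump_max. Qed.

Lemma Vm_minor k (x : nat -> F) y (g : nat -> nat) (j : 'I_k.+1) :
  row' ord_max (col' j (Vm k.+1 (upd x k y) g)) = Vm k x (fun j' => g (bump j j')).
Proof.
apply/matrixP => i j'; rewrite !mxE /= bump_max /upd.
by rewrite ltn_eqF.
Qed.

Lemma Bm_det0 k (t g : nat -> nat) (c : nat -> F) :
  (\sum_(i < k) t i < \sum_(j < k) g j)%N -> \det (Bm k t g c) = 0.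
Proof.
elim: k g => [|k IH] g; first by rewrite !big_ord0.
move=> H; rewrite (expand_det_row _ ord_max) big1 // => j _.
rewrite /cofactor Bm_minor mxE /gg /=.
case: leqP => gj; last by rewrite mul0r.
rewrite IH ?mulr0 ?mul0r //.
move: H; rewrite big_ord_recr (sum_lift g k j) /=.
move: (\sum_(i < k) t i) (\sum_(j' < k) g (bump j j')) => A B.
move: gj; lia.
Qed.


Lemma gsum_main (G : nat -> seq F) (w : nat -> F -> F) (t : nat -> nat) (c : nat -> F) :
  (forall i e, (e <= t i)%N -> \sum_(y <- G i) w i y * y ^+ e = (e == t i)%:R) ->
  (forall i m, (m <= t i)%N -> (m`!)%:R != 0 :> F) ->
  forall k (g : nat -> nat) d, (\sum_(j < k) g j + d <= \sum_(i < k) t i)%N ->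
  gsum G k (fun x => Wf w k x * \det (Vm k x g) * Lf c k x ^+ d) =
  ((\sum_(j < k) g j + d == \sum_(i < k) t i)%N)%:R * (d`!)%:R * \det (Bm k t g c).
Proof.
move=> Hlam Hfact; elim => [|k IH] g d.
  rewrite !big_ord0 add0n leqn0 => /eqP -> /=.
  by rewrite /Wf /Lf !big_ord0 !det_mx00 expr0 !mulr1.
move=> Hle.
pose gj (j : 'I_k.+1) := fun j' => g (bump j j').
pose D (j : 'I_k.+1) (a : nat) :=
  gsum G k (fun x => Wf w k x * \det (Vm k x (gj j)) * Lf c k x ^+ (d - a)).
pose Y (j : 'I_k.+1) (a : nat) := \sum_(y <- G k) w k y * y ^+ (g j + a).
pose K (j : 'I_k.+1) (a : nat) := (-1) ^+ (k + j) * 'C(d, a)%:R * c k ^+ a.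
have step : forall y x, Wf w k.+1 (upd x k y) * \det (Vm k.+1 (upd x k y) g) *
      Lf c k.+1 (upd x k y) ^+ d =
    \sum_(j < k.+1) \sum_(a < d.+1) (K j a * (w k y * y ^+ (g j + a))) *
      (Wf w k x * \det (Vm k x (gj j)) * Lf c k x ^+ (d - a)).
  move=> y x.
  have -> : Wf w k.+1 (upd x k y) = Wf w k x * w k y.
    rewrite /Wf big_ord_recr /= {2}/upd eqxx; congr (_ * _); apply: eq_bigr => i _.
    by rewrite /upd ltn_eqF.
  have -> : Lf c k.+1 (upd x k y) = Lf c k x + c k * y.
    rewrite /Lf big_ord_recr /= {2}/upd eqxx; congr (_ + _); apply: eq_bigr => i _.
    by rewrite /upd ltn_eqF.
  rewrite (expand_det_row _ ord_max) exprDn -mulrA big_distrlr mulr_sumr.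
  apply: eq_bigr => j _; rewrite mulr_sumr; apply: eq_bigr => a _.
  rewrite /cofactor Vm_minor mxE /= {1}/upd eqxx /K exprD exprMn -mulr_natr.
  rewrite /gj !exprD; ring.
have -> : gsum G k.+1 (fun x => Wf w k.+1 x * \det (Vm k.+1 x g) * Lf c k.+1 x ^+ d) =
    \sum_(j < k.+1) \sum_(a < d.+1) (K j a * Y j a) * D j a.
  rewrite /=.
  transitivity (\sum_(y <- G k) \sum_(j < k.+1) \sum_(a < d.+1)
      (K j a * (w k y * y ^+ (g j + a))) * D j a).
    apply: eq_bigr => y _.
    rewrite (@gsum_ext G k _ (fun x => \sum_(j < k.+1) \sum_(a < d.+1)
      (K j a * (w k y * y ^+ (g j + a))) *
      (Wf w k x * \det (Vm k x (gj j)) * Lf c k x ^+ (d - a)))); last first.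
      by move=> x _; exact: step.
    rewrite gsum_sum; apply: eq_bigr => j _; rewrite gsum_sum; apply: eq_bigr => a _.
    by rewrite gsumZ.
  rewrite exchange_big; apply: eq_bigr => j _; rewrite exchange_big.
  apply: eq_bigr => a _; rewrite -big_distrl /= -mulr_sumr.
  done.
rewrite (expand_det_row _ ord_max) mulr_sumr; apply: eq_bigr => j _.
rewrite /cofactor Bm_minor mxE /=.
have Sg := sum_lift g k j.
have St : (\sum_(i < k.+1) t i = \sum_(i < k) t i + t k)%N by rewrite big_ord_recr.
move: Hle; rewrite Sg St.
set Sgj := (\sum_(j' < k) g (bump j j'))%N.
set St' := (\sum_(i < k) t i)%N => Hle.
have DE : forall a, (Sgj + (d - a) <= St')%N -> D j a =
    ((Sgj + (d - a) == St')%N)%:R * (d - a)`!%:R * \det (Bm k t (gj j) c).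
  by move=> a H; rewrite /D IH.
case: (leqP (g j) (t k)) => gjt; last first.
  rewrite /gg leqNgt gjt /= mul0r mulr0.
  rewrite big1 // => a _; have ad := ltn_ord a; rewrite DE; last by lia.
  have -> : (Sgj + (d - a) == St')%N = false by apply/negbTE/eqP; lia.
  by rewrite !mul0r mulr0.
set a0 := (t k - g j)%N.
have a0f : (a0`!)%:R != 0 :> F by apply: (Hfact k); rewrite /a0 leq_subr.
case: (leqP a0 d) => a0d.
  have a0d' : (a0 < d.+1)%N by rewrite ltnS.
  rewrite (bigD1 (Ordinal a0d')) //= big1 ?addr0; last first.
    move=> a /= aNa0; have ad := ltn_ord a.
    have aNa0' : (a : nat) != a0 by apply: contra aNa0 => /eqP h; apply/eqP/val_inj.
    case: (ltnP (g j + a) (t k)) => h.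
      rewrite /Y Hlam; last by lia.
      by rewrite (_ : (g j + a == t k) = false) ?mulr0 ?mul0r //; apply/negbTE/eqP; lia.
    rewrite DE; last by move: aNa0'; rewrite /a0; lia.
    have -> : (Sgj + (d - a) == St')%N = false.
      by apply/negbTE/eqP; move: aNa0'; rewrite /a0; lia.
    by rewrite !mul0r mulr0.
  rewrite /Y Hlam; last by rewrite /a0; lia.
  rewrite (_ : (g j + a0 == t k) = true); last by apply/eqP; rewrite /a0; lia.
  rewrite DE; last by rewrite /a0; lia.
  have -> : (Sgj + (d - a0) == St')%N = (g j + Sgj + d == St' + t k)%N.
    by apply/idP/idP => /eqP h; apply/eqP; move: h; rewrite /a0; lia.
  rewrite /gg gjt /K -(bin_fact a0d) !natrM.
  rewrite -/a0 /gj /=; field.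
  by rewrite a0f.
rewrite big1; last first.
  move=> a _; have ad := ltn_ord a.
  rewrite /Y Hlam; last by lia.
  by rewrite (_ : (g j + a == t k) = false) ?mulr0 ?mul0r //; apply/negbTE/eqP; rewrite /a0 in a0d; lia.
case: eqP => h; last by rewrite !mul0r.
rewrite Bm_det0 ?mulr0 //; rewrite /a0 in a0d; lia.
Qed.

Definition lrank (c : nat -> F) i := count_mem (c i) [seq c j | j <- iota 0 i].

Lemma lrank_le (c : nat -> F) i : (lrank c i <= i)%N.
Proof. by rewrite /lrank (leq_trans (count_size _ _)) // size_map size_iota. Qed.

Lemma rank_exists (c : nat -> F) K a l :
  (l < count_mem a [seq c j | j <- iota 0 K])%N ->
  exists i, [/\ (i < K)%N, c i = a & lrank c i = l].
Proof.
elim: K l => [|K IH] l; first by [].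
have -> : iota 0 K.+1 = iota 0 K ++ [:: K] by rewrite -addn1 iotaD.
rewrite map_cat count_cat /= addn0.
case: (ltnP l (count_mem a [seq c j | j <- iota 0 K])) => h1 h2.
  by have [i [iK ci li]] := IH l h1; exists i; split => //; rewrite ltnS ltnW.
have cKa : c K = a.
  move: h2; case: (c K =P a) => // _; rewrite addn0 => h3.
  by move: (leq_ltn_trans h1 h3); rewrite ltnn.
exists K; split => //; rewrite /lrank cKa.
by move: h2; rewrite cKa eqxx addn1 ltnS => h3; apply/eqP; rewrite eqn_leq h3 h1.
Qed.

Lemma sum_count_undup (s : seq F) :
  (\sum_(a <- undup s) count_mem a s)%N = size s.
Proof.
rewrite -(perm_size (perm_count_undup s)) size_flatten /shape -map_comp.
by rewrite sumnE big_map; apply: eq_bigr => a _ /=; rewrite size_nseq.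
Qed.

Lemma Bm_hermite (c : nat -> F) k :
  (forall m, (m < k)%N -> (m`!)%:R != 0 :> F) ->
  \det (Bm k (fun i => (k.-1 - lrank c i)%N) (fun j => j) c) != 0.
Proof.
move=> Hf; set t := fun i => (k.-1 - lrank c i)%N.
apply/negP => /eqP d0.
have : \det (Bm k t (fun j => j) c)^T == 0 by rewrite det_tr d0.
case/det0P => v vnz vB.
have Hrow : forall i : 'I_k, \sum_(j < k) v 0 j * gg (t i) j (c i) = 0.
  move=> i; have := congr1 (fun M : 'M[F]_(1, k) => M 0 i) vB; rewrite !mxE => H.
  rewrite -[X in _ = X]H.
  by apply: eq_bigr => j _; rewrite !mxE.
pose p : {poly F} := \sum_(j < k) (v 0 j / (k.-1 - j)`!%:R) *: 'X^(k.-1 - j).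
have szp : (size p <= k)%N.
  apply: leq_trans (size_sum _ _ _) _; apply/bigmax_leqP => j _.
  apply: leq_trans (size_scale_leq _ _) _; rewrite size_polyXn.
  by move: (ltn_ord j); lia.
have pnz : p != 0.
  apply: contra vnz => /eqP p0; apply/eqP/rowP => j; rewrite mxE.
  have := congr1 (fun q : {poly F} => q`_(k.-1 - j)) p0.
  rewrite coef0 coef_sum (bigD1 j) //= big1 ?addr0; last first.
    move=> j' jj'; rewrite coefZ coefXn.
    rewrite (_ : (k.-1 - j == k.-1 - j')%N = false) ?mulr0 //.
    apply/negbTE; apply: contra jj' => /eqP h; apply/eqP/val_inj => /=.
    move: h (ltn_ord j) (ltn_ord j'); lia.
  rewrite coefZ coefXn eqxx mulr1 => /eqP; rewrite mulf_eq0 invr_eq0.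
  have := Hf (k.-1 - j)%N; rewrite (_ : (k.-1 - j < k)%N) //.
    by move=> /(_ isT) /negPf ->; rewrite orbF => /eqP.
  by move: (ltn_ord j); lia.
have nD0 : forall l, (0 : {poly F})^`N(l) = 0.
  by move=> l; rewrite -polyC0 nderivnC; case: eqP.
have Hder : forall i : 'I_k, (p^`N(lrank c i)).[c i] = 0.
  move=> i; set l := lrank c i.
  rewrite (big_morph (fun q => q^`N(l)) (nderivnD l) (nD0 l)) horner_sum.
  transitivity ((l`!%:R)^-1 * \sum_(j < k) v 0 j * gg (t i) j (c i)); last by rewrite Hrow mulr0.
  rewrite mulr_sumr; apply: eq_bigr => j _.
  rewrite nderivnZ nderivnXn hornerZ hornerMn hornerXn /gg /t.
  have jk := ltn_ord j; have il : (l <= i)%N := lrank_le c i; have ik := ltn_ord i.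
  case: (leqP j (k.-1 - l)) => hj.
    have hl : (l <= k.-1 - j)%N by move: hj jk il ik; lia.
    rewrite -/l.
    have -> : (k.-1 - l - j = k.-1 - j - l)%N by rewrite subnAC.
    have f2 : (k.-1 - j)`!%:R != 0 :> F by apply: Hf; lia.
    move: f2; rewrite -(bin_fact hl) !natrM !mulf_eq0 !negb_or => /and3P[fC fl fr].
    rewrite -mulr_natr.
    field.
    by rewrite fC fl fr.
  rewrite bin_small ?mulr0n ?mulr0 //; move: hj jk il ik; lia.
set s := [seq c j | j <- iota 0 k].
have Hm : forall a, (count_mem a s <= mup a p)%N.
  move=> a; rewrite mup_geq //; apply: hasse_dvd => l hl.
  have [i [ik ci li]] := @rank_exists c k a l hl.
  by have := Hder (Ordinal ik); rewrite /= li ci.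
have h1 := @mup_sum_lt F (undup s) p pnz (undup_uniq s).
have h2 : (\sum_(a <- undup s) count_mem a s <= \sum_(a <- undup s) mup a p)%N.
  by apply: leq_sum => a _; exact: Hm.
move: h2; rewrite sum_count_undup size_map size_iota => h2.
by move: (leq_ltn_trans h2 (leq_trans h1 szp)); rewrite ltnn.
Qed.


Definition Pk (c : nat -> F) k := (\sum_(i < k) (i - lrank c i))%N.

Lemma sum_t (c : nat -> F) k :
  (\sum_(i < k) (k.-1 - lrank c i) = \sum_(i < k) i + Pk c k)%N.
Proof.
rewrite /Pk.
have -> : (\sum_(i < k) i = \sum_(i < k) (k.-1 - i))%N.
  rewrite -(big_mkord xpredT (fun i => i)) big_rev_mkord subn0; apply: eq_bigr => i _.
  by move: (ltn_ord i); lia.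
rewrite -big_split /=; apply: eq_bigr => i _.
by move: (ltn_ord i) (lrank_le c i); lia.
Qed.

Lemma key (k : nat) (pos c : nat -> F) (T : F) (X : seq F) :
  (forall i j, (i < k)%N -> (j < k)%N -> pos i = pos j -> i = j) ->
  (forall m, (m <= maxn k (Pk c k))%N -> (m`!)%:R != 0 :> F) ->
  (forall pi : 'S_k, T + \sum_(i < k) c i * pos (pi i) \in X) ->
  (Pk c k < size X)%N.
Proof.
move=> posI Hf HX; rewrite ltnNge; apply/negP => hX.
set P := Pk c k in Hf hX *.
pose t i := if (i < k)%N then (k.-1 - lrank c i)%N else 0%N.
pose G i := if (i < k)%N then [seq pos j | j <- iota 0 (t i).+1] else [:: 0].
pose w i y := (\prod_(f <- G i | f != y) (y - f))^-1.
have tk : forall i, (t i < k.+1)%N.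
  by move=> i; rewrite /t; case: ifP => // ik; move: ik; lia.
have Hlam : forall i e, (e <= t i)%N ->
    \sum_(y <- G i) w i y * y ^+ e = (e == t i)%:R.
  move=> i e he; rewrite /w.
  have [uG szG] : uniq (G i) /\ size (G i) = (t i).+1.
    rewrite /G; case: ifP => ik; last by rewrite /t ik.
    rewrite size_map size_iota; split => //.
    rewrite map_inj_in_uniq ?iota_uniq // => a b; rewrite !mem_iota !add0n => ha hb.
    apply: posI; move: ha hb (tk i); rewrite /t ik; lia.
  by rewrite lagrange_sum // szG.
have Hfact : forall i m, (m <= t i)%N -> (m`!)%:R != 0 :> F.
  move=> i m hm; apply: Hf; rewrite leq_max; apply/orP; left; move: hm (tk i); lia.
set Rp := \prod_(y <- [seq e - T | e <- X] ++ nseq (P - size X) (- T)) ('X - y%:P).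
have Rmon : Rp \is monic by rewrite monic_prod_XsubC.
have Rsz : size Rp = P.+1.
  by rewrite size_prod_XsubC size_cat size_map size_nseq subnKC.
pose h x := Wf w k x * \det (Vm k x (fun j => j)) * Rp.[Lf c k x].
have tk' : forall i, (i < k)%N -> (t i < k)%N.
  by move=> i ik; rewrite /t ik; move: ik (lrank_le c i); lia.
have ha : gsum G k h = 0.
  rewrite (@gsum_ext G k h (fun _ => 0)) ?gsum0 // => x Hx; rewrite /h.
  case: (boolP [forall i : 'I_k, forall j : 'I_k, (x i == x j) ==> (i == j)])
    => [inj|ninj]; last first.
    move/forallPn: ninj => [i /forallPn [j]]; rewrite negb_imply => /andP [/eqP xij ij].
    rewrite (determinant_alternate ij) ?mulr0 ?mul0r // => j'.
    by rewrite !mxE xij.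
  have memx : forall i : 'I_k, x i \in [seq pos j | j <- iota 0 k].
    move=> i; have := Hx i (ltn_ord i); rewrite /G ltn_ord => /mapP [j jin ->].
    apply/mapP; exists j => //; move: jin; rewrite !mem_iota !add0n => jt.
    by apply: leq_trans jt _; apply: tk'.
  have ilt : forall i : 'I_k, (index (x i) [seq pos j | j <- iota 0 k] < k)%N.
    move=> i; have hs : size [seq pos j | j <- iota 0 k] = k by rewrite size_map size_iota.
    by rewrite -[X in (_ < X)%N]hs index_mem.
  pose f (i : 'I_k) : 'I_k := Ordinal (ilt i).
  have fE : forall i, pos (f i) = x i.
    move=> i; rewrite -[RHS](nth_index (pos 0) (memx i)) (nth_map 0); last first.
      by rewrite size_iota.
    by rewrite nth_iota.
  have finj : injective f.
    move=> i j /(congr1 (fun o : 'I_k => pos o)); rewrite !fE => /eqP xij; apply/eqP.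
    exact: (implyP (forallP (forallP inj i) j)).
  have := HX (perm finj).
  have -> : \sum_(i < k) c i * pos (perm finj i) = Lf c k x.
    by rewrite /Lf; apply: eq_bigr => i _; rewrite permE fE.
  move=> memL.
  have -> : Rp.[Lf c k x] = 0.
    rewrite /Rp horner_prod; apply/eqP; rewrite prodf_seq_eq0; apply/hasP.
    exists (Lf c k x); last by rewrite /= hornerXsubC subrr.
    by rewrite mem_cat; apply/orP; left; apply/mapP; exists (T + Lf c k x); rewrite // addrAC subrr add0r.
  by rewrite mulr0.
have St : (\sum_(i < k) t i = \sum_(i < k) i + P)%N.
  by rewrite -sum_t; apply: eq_bigr => i _; rewrite /t ltn_ord.
have hb : gsum G k h = P`!%:R * \det (Bm k t (fun j => j) c).
  rewrite (@gsum_ext G k h (fun x => \sum_(d < size Rp) Rp`_d *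
      (Wf w k x * \det (Vm k x (fun j => j)) * Lf c k x ^+ d))); last first.
    move=> x _; rewrite /h horner_coef mulr_sumr; apply: eq_bigr => d _; ring.
  rewrite gsum_sum.
  rewrite Rsz big_ord_recr /= big1 ?add0r; last first.
    move=> d _; rewrite gsumZ (@gsum_main G w t c Hlam Hfact); last first.
      by rewrite St leq_add2l ltnW.
    by rewrite St eqn_add2l ltn_eqF // mul0r mul0r mulr0.
  rewrite gsumZ (@gsum_main G w t c Hlam Hfact); last by rewrite St.
  rewrite St eqxx mul1r.
  by move: Rmon; rewrite monicE lead_coefE Rsz => /eqP ->; rewrite mul1r.
have : P`!%:R * \det (Bm k t (fun j => j) c) != 0.
  rewrite mulf_neq0 ?Hf ?leq_maxr //.
  have -> : Bm k t (fun j => j) c = Bm k (fun i => (k.-1 - lrank c i)%N) (fun j => j) c.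
    by apply/matrixP => i j; rewrite !mxE /t ltn_ord.
  by apply: Bm_hermite => m mk; apply: Hf; rewrite leq_max ltnW.
by rewrite -hb ha eqxx.
Qed.

End Grid.

Section MainPart.

Lemma card_nz (q : nat) : prime q -> #|[set x : 'F_q | x != 0]| = q.-1.
Proof.
move=> qP; have h := cardsC1 (0 : 'F_q); rewrite card_Fp // in h; rewrite -h.
apply/eqP; rewrite eqn_leq; apply/andP; split; apply: subset_leq_card; apply/subsetP => x; rewrite !inE //.
Qed.

Lemma pow_q1 (q : nat) (s : 'F_q) : prime q -> s != 0 -> s ^+ q.-1 = 1.
Proof.
move=> qP s0; apply: (mulIf s0); rewrite mul1r -exprSr prednK ?prime_gt0 //.
by have := expf_card s; rewrite card_Fp.
Qed.

Lemma pow_inj (q : nat) (s : 'F_q) : prime q -> Defs.generator_units s ->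
  forall i j, (i < q.-1)%N -> (j < q.-1)%N -> s ^+ i = s ^+ j -> i = j.
Proof.
move=> qP [s0 gen].
have main : forall i j, (i < j)%N -> (j < q.-1)%N -> s ^+ i = s ^+ j -> False.
  move=> i j ij jq E.
  set e := (j - i)%N.
  have e0 : (0 < e)%N by rewrite subn_gt0.
  have se : s ^+ e = 1.
    apply: (@mulfI _ (s ^+ i)); first by rewrite expf_neq0.
    by rewrite mulr1 -exprD subnKC // ltnW.
  have sub : [set x : 'F_q | x != 0] \subset [set s ^+ (val r) | r : 'I_e].
    apply/subsetP => x; rewrite inE => xnz; have [m ->] := gen x xnz.
    apply/imsetP; exists (Ordinal (ltn_pmod m e0)) => //=.
    by rewrite expr_mod.
  have := subset_leq_card sub; rewrite card_nz //.
  move/(leq_trans)/(_ (leq_imset_card _ _)); rewrite card_ord => h.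
  by move: (leq_trans h (leq_subr i j)); rewrite leqNgt jq.
move=> i j iq jq E.
case: (ltngtP i j) => // h; first by case: (main i j h jq E).
by case: (main j i h iq (esym E)).
Qed.

Definition AS (q : nat) (s u : 'F_q) (b : nat -> 'F_q) : {set 'F_q} :=
  [set \sum_(k < q.-1./2) b (sigma k) * (u * s ^+ (2 * k)) | sigma : 'S_(q.-1./2)].

Lemma half_facts (q : nat) : (q %% 4 = 1)%N ->
  (q.-1./2).*2 = q.-1 /\ ~~ odd (q.-1./2).
Proof.
move=> H4; set m := (q %/ 4)%N.
have qE : q = (4 * m).+1 by rewrite /m {1}(divn_eq q 4) H4 addn1 mulnC.
rewrite qE /= (_ : (4 * m = (2 * m).*2)%N); last by rewrite -mul2n mulnA.
by rewrite doubleK mul2n odd_double.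
Qed.

Lemma AS_closed (q : nat) (s u : 'F_q) (b : nat -> 'F_q) x :
  prime q -> (q %% 4 = 1)%N -> s != 0 ->
  x \in AS q s u b -> x * s ^+ 2 \in AS q s u b.
Proof.
move=> qP H4 s0; set n := q.-1./2.
have [nE _] := half_facts q H4.
have s2n : s ^+ (2 * n) = 1 by rewrite mul2n nE pow_q1.
case/imsetP => sigma _ ->; apply/imsetP.
exists (perm (@ord_pred_inj n) * sigma)%g; first by rewrite inE.
rewrite mulr_suml [RHS](reindex_inj (@ordS_inj n)) /=; apply: eq_bigr => k _.
rewrite permM permE ordSK -mulrA; congr (_ * _).
rewrite -mulrA; congr (_ * _); rewrite -exprD.
by rewrite muln_modr (expr_mod _ s2n) mulnSr.
Qed.

Lemma AS_coset (q : nat) (s u : 'F_q) (b : nat -> 'F_q) :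
  prime q -> (q %% 4 = 1)%N -> Defs.generator_units s ->
  ((q.-1./2).+2 <= #|AS q s u b|)%N -> (q.-1 <= #|AS q s u b|)%N.
Proof.
move=> qP H4 gs hA; have [s0 _] := gs.
set n := q.-1./2 in hA *; set A := AS q s u b in hA *.
have [nE _] := half_facts q H4.
have s2n : s ^+ (2 * n) = 1 by rewrite mul2n nE pow_q1.
have powA : forall x j, x \in A -> x * s ^+ (2 * j) \in A.
  move=> x j xA; elim: j => [|j IH]; first by rewrite muln0 expr0 mulr1.
  by rewrite mulnSr exprD mulrA; apply: AS_closed.
have pinj : forall i j, (i < n)%N -> (j < n)%N -> s ^+ (2 * i) = s ^+ (2 * j) -> i = j.
  move=> i j iN jN E.
  have h2 : forall m, (m < n)%N -> (2 * m < q.-1)%N.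
    by move=> m mN; rewrite -nE -mul2n ltn_mul2l /=.
  have := pow_inj q s qP gs _ _ (h2 i iN) (h2 j jN) E.
  by move/eqP; rewrite eqn_mul2l /= => /eqP.
pose Hs (x : 'F_q) := [set x * s ^+ (2 * val j) | j : 'I_n].
have cardH : forall x, x != 0 -> #|Hs x| = n.
  move=> x xnz; rewrite card_imset ?card_ord // => i j /(mulfI xnz) E.
  by apply: val_inj; apply: (pinj _ _ (ltn_ord i) (ltn_ord j) E).
have HsA : forall x, x \in A -> Hs x \subset A.
  by move=> x xA; apply/subsetP => z /imsetP [j _ ->]; apply: powA.
have [x xA xnz] : exists2 x, x \in A & x != 0.
  case: (pickP [pred x | (x \in A) && (x != 0)]) => [x /andP[xA xnz] | none].
    by exists x.
  have : A \subset [set 0].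
    by apply/subsetP => y yA; rewrite inE; move: (none y) => /=; rewrite yA /= => /negbFE.
  by move/subset_leq_card; rewrite cards1 => h; move: (leq_trans hA h).
have [y [yA yNH ynz]] : exists y, [/\ y \in A, y \notin Hs x & y != 0].
  case: (pickP [pred y | [&& y \in A, y \notin Hs x & y != 0]]) => [y /and3P[? ? ?] | none].
    by exists y.
  have : A \subset 0 |: Hs x.
    apply/subsetP => y yA; rewrite !inE; move: (none y) => /=; rewrite yA /=.
    by case: (y \in Hs x); case: (y == 0).
  move/subset_leq_card; rewrite cardsU1 cardH // => h; move: (leq_trans hA h).
  by case: (0 \notin Hs x); rewrite /= ?add1n ?add0n ?ltnn // ltnNge leqnSn.
have disj : #|Hs x :&: Hs y| = 0%N.
  apply/eqP; rewrite cards_eq0; apply/eqP/setP => z; rewrite !inE.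
  apply/negbTE/negP => /andP [/imsetP [i _ zi] /imsetP [j _ zj]].
  apply: (negP yNH); apply/imsetP.
  have npos : (0 < n)%N by apply: leq_ltn_trans (ltn_ord i).
  exists (Ordinal (ltn_pmod (i + (n - j)) npos)) => //=.
  rewrite muln_modr (expr_mod _ s2n) mulnDr exprD mulrA -zi zj -mulrA -exprD.
  rewrite -mulnDr subnKC; last exact: ltnW (ltn_ord j).
  by rewrite s2n mulr1.
have HU : Hs x :|: Hs y \subset A by rewrite subUset !HsA.
move: (subset_leq_card HU); rewrite cardsU disj subn0 !cardH // addnn.
by rewrite -nE.
Qed.

Lemma count_iota_sum (p : pred nat) i : count p (iota 0 i) = (\sum_(j < i) p j)%N.
Proof.
elim: i => [|i IH]; first by rewrite big_ord0.
have -> : iota 0 i.+1 = iota 0 i ++ [:: i] by rewrite -addn1 iotaD.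
by rewrite count_cat IH big_ord_recr /= addn0.
Qed.

Lemma sub_lrank (F : fieldType) (b : nat -> F) i :
  (i - lrank F b i = \sum_(j < i) (b j != b i))%N.
Proof.
have e : (count (fun j => b j == b i) (iota 0 i) +
          count (fun j => b j != b i) (iota 0 i) = i)%N.
  rewrite -[X in _ = X](size_iota 0 i) -(count_predC (fun j => b j == b i)).
  by congr (_ + _); apply: eq_count.
rewrite -(count_iota_sum (fun j => b j != b i)) -[X in (X - _)%N]e /lrank count_map.
rewrite [count (preim _ _) _](@eq_count _ _ (fun j => b j == b i)) //.
by rewrite addKn.
Qed.

Lemma Pk_sum2 (F : fieldType) (b : nat -> F) k :
  (Pk F b k = \sum_(i < k) \sum_(j < k) ((j < i) && (b j != b i)))%N.
Proof.
rewrite /Pk; apply: eq_bigr => i _; rewrite sub_lrank.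
rewrite (big_ord_widen k (fun j => (b j != b i) : nat) (ltnW (ltn_ord i))).
rewrite big_mkcond /=; apply: eq_bigr => j _.
by case: (j < i)%N.
Qed.

Lemma twoP (F : fieldType) (b : nat -> F) n :
  (2 * \sum_(i < n) \sum_(j < n) ((j < i) && (b j != b i)) =
   \sum_(i < n) \sum_(j < n) (b j != b i))%N.
Proof.
rewrite mul2n -addnn {2}exchange_big -big_split /=; apply: eq_bigr => i _.
rewrite -big_split /=; apply: eq_bigr => j _.
case: (ltngtP j i) => h /=; rewrite ?addn0 ?add0n ?(eq_sym (b i)) //.
by rewrite (val_inj h) eqxx.
Qed.

Lemma sum_two n (f : 'I_n -> nat) i j : i != j -> (f i + f j <= \sum_(k < n) f k)%N.
Proof.
move=> ij; rewrite (bigD1 i) //= (bigD1 j) /=; last by rewrite eq_sym.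
by rewrite addnA leq_addr.
Qed.

Lemma Pk_lower (F : fieldType) (b : nat -> F) n : (6 <= n)%N ->
  (forall i, (i < n)%N -> exists j1 j2,
      [/\ (j1 < n)%N, (j2 < n)%N, j1 != j2, b j1 != b i & b j2 != b i]) ->
  (exists i0 j0, [/\ (i0 < n)%N, (j0 < n)%N & b i0 != b j0]) ->
  (n.+1 <= Pk F b n)%N.
Proof.
move=> n6 H2 [i0 [j0 [i0n j0n bij]]].
pose D (i : 'I_n) := (\sum_(j < n) (b j != b i))%N.
have h2 : (2 * Pk F b n = \sum_(i < n) D i)%N by rewrite Pk_sum2 twoP.
have D2 : forall i : 'I_n, (2 <= D i)%N.
  move=> i; have [j1 [j2 [j1n j2n j12 b1 b2]]] := H2 i (ltn_ord i).
  have := @sum_two n (fun j : 'I_n => (b j != b i) : nat) (Ordinal j1n) (Ordinal j2n) j12.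
  by rewrite /= b1 b2.
have Dn : (n <= D (Ordinal i0n) + D (Ordinal j0n))%N.
  rewrite /D -big_split /=.
  apply: (@leq_trans (\sum_(j < n) 1)%N); first by rewrite sum1_card card_ord.
  apply: leq_sum => j _; case: (b j =P b i0) => [->|] //=.
  by rewrite bij.
have ij : Ordinal i0n != Ordinal j0n.
  by apply: contra bij => /eqP [->].
have : (\sum_(i < n) (D i - 2) + 2 * n = \sum_(i < n) D i)%N.
  rewrite mulnC -[X in (_ + X * _)%N]card_ord -sum_nat_const -big_split /=.
  by apply: eq_bigr => i _; rewrite subnK.
have := @sum_two n (fun i => D i - 2)%N _ _ ij.
move: (D2 (Ordinal i0n)) (D2 (Ordinal j0n)) Dn h2.
move: (D (Ordinal i0n)) (D (Ordinal j0n)) (\sum_(i < n) D i)%N (\sum_(i < n) (D i - 2))%N.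
move=> a c S S2; lia.
Qed.

Lemma window (F : fieldType) (b : nat -> F) n : (n.+1 <= Pk F b n)%N ->
  exists k, [/\ (k <= n)%N, (n.+1 <= Pk F b k)%N & (Pk F b k <= 2 * n)%N].
Proof.
move=> h.
have ex : exists k, (n.+1 <= Pk F b k)%N by exists n.
case: (ex_minnP ex) => k0 hk0 hmin.
exists k0; split => //; first exact: hmin.
case: k0 hk0 hmin => [|k] hk hmin; first by move: hk; rewrite /Pk big_ord0.
have kn : (k < n)%N by apply: hmin.
have hk' : (Pk F b k <= n)%N.
  rewrite leqNgt; apply/negP => h'; have := hmin k h'; by rewrite ltnn.
rewrite /Pk big_ord_recr /= -/(Pk F b k).
move: (leq_subr (lrank F b k) k) hk' kn; lia.
Qed.

Lemma fact_nz (q m : nat) : prime q -> (m < q)%N -> (m`!)%:R != 0 :> 'F_q.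
Proof.
move=> qP mq; apply/negP => /eqP /(congr1 (fun x : 'F_q => nat_of_ord x)); rewrite val_Fp_nat //= => h.
have : (q %| m`!)%N by rewrite /dvdn h.
elim: m mq {h} => [|m IH] mq.
  by rewrite fact0 dvdn1 => /eqP q1; move: qP; rewrite q1.
rewrite factS Euclid_dvdM // => /orP [h1|h2].
  by move: (dvdn_leq (ltn0Sn m) h1); rewrite leqNgt mq.
by apply: IH => //; apply: ltnW.
Qed.

Lemma ext_perm (n k : nat) (le : (k <= n)%N) (rho : 'S_k) :
  exists sigma : 'S_n, (forall m' : 'I_k, sigma (widen_ord le m') = widen_ord le (rho m'))
    /\ (forall m : 'I_n, ~~ (m < k)%N -> sigma m = m).
Proof.
pose f (m : 'I_n) : 'I_n :=
  if @insub _ (fun x => x < k)%N 'I_k (val m) is Some m' then widen_ord le (rho m') else m.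
have f1 : forall m' : 'I_k, f (widen_ord le m') = widen_ord le (rho m').
  by move=> m'; rewrite /f /= valK.
have f2 : forall m : 'I_n, ~~ (m < k)%N -> f m = m.
  by move=> m mk; rewrite /f insubF //; apply/negbTE.
have finj : injective f.
  move=> m1 m2; rewrite /f.
  case: insubP => [m1' h1 v1|h1]; case: insubP => [m2' h2 v2|h2].
  - move/(congr1 val) => /= /val_inj /perm_inj E.
    by apply: val_inj; rewrite -v1 -v2 E.
  - move=> E; move: h2; rewrite -E /=; by rewrite ltn_ord.
  - move=> E; move: h1; rewrite E /=; by rewrite ltn_ord.
  - by [].
exists (perm finj); split => [m'|m mk]; rewrite permE ?f1 ?f2 //.
Qed.

Lemma AS_big (q : nat) (s u : 'F_q) (b : nat -> 'F_q) :
  prime q -> (q %% 4 = 1)%N -> (13 <= q)%N -> Defs.generator_units s -> u != 0 ->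
  (forall i, (i < q.-1./2)%N -> exists j1 j2, [/\ (j1 < q.-1./2)%N, (j2 < q.-1./2)%N,
      j1 != j2, b j1 != b i & b j2 != b i]) ->
  (exists i0 j0, [/\ (i0 < q.-1./2)%N, (j0 < q.-1./2)%N & b i0 != b j0]) ->
  ((q.-1./2).+2 <= #|AS q s u b|)%N.
Proof.
move=> qP H4 q13 gs u0 H2 H3.
have [nE _] := half_facts q H4.
have n6 : (6 <= q.-1./2)%N.
  rewrite -(leq_pmul2l (isT : (0 < 2)%N)) [X in (_ <= X)%N]mul2n nE.
  by rewrite -ltnS prednK ?prime_gt0.
have hPn := @Pk_lower _ b (q.-1./2) n6 H2 H3.
have [k [kn hk1 hk2]] := @window _ b _ hPn.
pose pos i := u * s ^+ (2 * i).
pose T := \sum_(m < q.-1./2 | ~~ (m < k)%N) b m * pos m.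
have h2 : forall m, (m < q.-1./2)%N -> (2 * m < q.-1)%N.
  by move=> m mN; rewrite -nE -mul2n ltn_mul2l /=.
have Hinj : forall i j, (i < k)%N -> (j < k)%N -> pos i = pos j -> i = j.
  move=> i j ik jk /(mulfI u0) E.
  have := pow_inj q s qP gs _ _ (h2 i (leq_trans ik kn)) (h2 j (leq_trans jk kn)) E.
  by move/eqP; rewrite eqn_mul2l /= => /eqP.
have Hf : forall m, (m <= maxn k (Pk _ b k))%N -> (m`!)%:R != 0 :> 'F_q.
  move=> m hm; apply: fact_nz => //.
  have qE : q = ((q.-1./2).*2).+1 by rewrite nE prednK ?prime_gt0.
  rewrite qE ltnS -mul2n; apply: leq_trans hm _; rewrite geq_max hk2 andbT.
  by apply: leq_trans kn _; rewrite leq_pmull.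
have Hperm : forall pi : 'S_k, T + \sum_(i < k) b i * pos (pi i) \in enum (AS q s u b).
  move=> pi; rewrite mem_enum; apply/imsetP.
  have [sigma [s1 s2]] := @ext_perm (q.-1./2) k kn (pi^-1)%g.
  exists sigma; first by rewrite inE.
  rewrite (bigID (fun m : 'I_(q.-1./2) => (m < k)%N)) /= addrC; congr (_ + _).
    by apply: eq_bigr => m mk; rewrite s2.
  rewrite big_ord_narrow [RHS](reindex_inj (@perm_inj _ pi)) /=.
  by apply: eq_bigr => i _; rewrite s1 /= permK.
have := key 'F_q k pos b T (enum (AS q s u b)) Hinj Hf Hperm.
by rewrite -cardE => h; apply: leq_trans h; rewrite ltnS.
Qed.

Lemma class_b (q : nat) (a : nat -> 'F_q) p e : (q %% 4 = 1)%N -> (p < 2)%N -> (e < 2)%N ->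
  Defs.class_nonconstant a (2 * p + e)%N ->
  exists j1 j2, [/\ (j1 < q.-1./2)%N, (j2 < q.-1./2)%N, (j1 %% 2 = p)%N,
     (j2 %% 2 = p)%N & a (2 * j1 + e)%N != a (2 * j2 + e)%N].
Proof.
move=> H4 hp he [i [j [iq jq ir jr aij]]].
exists (i %/ 2)%N, (j %/ 2)%N.
have ei : (2 * (i %/ 2) + e = i)%N by move: ir hp he; lia.
have ej : (2 * (j %/ 2) + e = j)%N by move: jr hp he; lia.
rewrite ei ej; split => //.
- by rewrite -divn2; move: iq H4 ir; rewrite -subn1; lia.
- by rewrite -divn2; move: jq H4 jr; rewrite -subn1; lia.
- by move: ir hp he; lia.
- by move: jr hp he; lia.
Qed.

Lemma conds_b (q : nat) (a : nat -> 'F_q) e : (q %% 4 = 1)%N -> (e < 2)%N ->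
  Defs.class_nonconstant a e -> Defs.class_nonconstant a (2 + e) ->
  (forall i, (i < q.-1./2)%N -> exists j1 j2, [/\ (j1 < q.-1./2)%N, (j2 < q.-1./2)%N,
      j1 != j2, a (2 * j1 + e)%N != a (2 * i + e)%N & a (2 * j2 + e)%N != a (2 * i + e)%N]) /\
  (exists i0 j0, [/\ (i0 < q.-1./2)%N, (j0 < q.-1./2)%N & a (2 * i0 + e)%N != a (2 * j0 + e)%N]).
Proof.
move=> H4 he C0 C1.
have [x1 [x2 [x1n x2n x1p x2p ax]]] := @class_b q a 0 e H4 isT he C0.
have [y1 [y2 [y1n y2n y1p y2p ay]]] := @class_b q a 1 e H4 isT he C1.
split; last by exists x1, x2.
move=> i iN.
have [je [jen jep ja]] : exists je, [/\ (je < q.-1./2)%N, (je %% 2 = 0)%N &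
    a (2 * je + e)%N != a (2 * i + e)%N].
  case: (a (2 * x1 + e)%N =P a (2 * i + e)%N) => h.
    by exists x2; split => //; rewrite -h eq_sym.
  by exists x1; split => //; apply/eqP.
have [jo [jon jop ja']] : exists jo, [/\ (jo < q.-1./2)%N, (jo %% 2 = 1)%N &
    a (2 * jo + e)%N != a (2 * i + e)%N].
  case: (a (2 * y1 + e)%N =P a (2 * i + e)%N) => h.
    by exists y2; split => //; rewrite -h eq_sym.
  by exists y1; split => //; apply/eqP.
exists je, jo; split => //.
by apply/eqP => E; move: jep jop; rewrite E => ->.
Qed.

Lemma AS_final (q : nat) (s u : 'F_q) (a : nat -> 'F_q) e :
  prime q -> (q %% 4 = 1)%N -> (13 <= q)%N -> Defs.generator_units s -> u != 0 ->
  (e < 2)%N -> Defs.class_nonconstant a e -> Defs.class_nonconstant a (2 + e) ->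
  (q.-1 <= #|AS q s u (fun j => a (2 * j + e)%N)|)%N.
Proof.
move=> qP H4 q13 gs u0 he C0 C1.
have [H2 H3] := @conds_b q a e H4 he C0 C1.
apply: AS_coset => //.
exact: AS_big.
Qed.

End MainPart.

Theorem corollary3 (q : nat) (s : 'F_q) (a : nat -> 'F_q) :
  prime q -> (q %% 4 = 1)%N -> (13 <= q)%N ->
  generator_units s ->
  (forall r : nat, (r < 4)%N -> class_nonconstant a r) ->
  (q.-1 <= #|A_even s a|)%N /\ (q.-1 <= #|A_odd s a|)%N.
Proof.
move=> qP H4 q13 gs Hc; have [s0 _] := gs.
have -> : A_even s a = AS q s 1 (fun j => a (2 * j + 0)%N).
  by apply: eq_imset => sigma; apply: eq_bigr => k _; rewrite addn0 mul1r.
have -> : A_odd s a = AS q s s (fun j => a (2 * j + 1)%N).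
  by apply: eq_imset => sigma; apply: eq_bigr => k _; rewrite addn1 exprS.
split; apply: AS_final => //; try exact: oner_neq0; apply: Hc => //.
Qed.
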